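(* Let $L\ge2$, $\rho>0$, and let $(\alpha_k)_{k\ge0}$ be nonnegative reals, not all zero, with $\bar\alpha:=\sum_{k\ge1}k\alpha_k\in(0,\infty)$, satisfying the fixed point equations $\alpha_{k+1}u_{k+1}=\rho\,\bar\alpha^{L-1}\alpha_k$ for all $k\ge0$, where $$u_k=k\sum_{k_2,\dots,k_L=1}^{\infty}\Big(\tfrac1k\wedge\tfrac1{k_2}\wedge\cdots\wedge\tfrac1{k_L}\Big)\prod_{i=2}^{L}k_i\alpha_{k_i},\quad k\ge1.$$ Then all $\alpha_k>0$, $\alpha_{k+1}/\alpha_k=\rho\bar\alpha^{L-1}/u_{k+1}$, and the sequence $(\alpha_k)$ is unimodal: it is increasing in $k$ as long as $u_{k+1}<\rho\bar\alpha^{L-1}$ and nonincreasing afterwards, so that its maximum is attained at $k_0=\max\{k>0:\ u_k<\rho\bar\alpha^{L-1}\}$ (with $k_0$ taken as $0$ if this set is empty).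
   Context: $a\wedge b$ denotes $\min(a,b)$. These are the mean-field fixed point equations for the stationary distribution $\alpha_k$ of the number of transfers on a link in a large symmetrical best-effort network with routes of length $L$ and link load $\rho$ under the min policy. *)

(* Defs.v *)
From Stdlib Require Import Reals Lra Lia ClassicalEpsilon.
Open Scope R_scope.

(* Value of a convergent real series  sum_{n>=0} f n  (0 by convention if it
   diverges; under the hypotheses of the theorem all series used converge). *)
Definition series (f : nat -> R) : R :=
  match excluded_middle_informative (exists l, infinite_sum f l) with
  | left H => proj1_sig (constructive_indefinite_description _ H)
  | right _ => 0
  end.

(* Hence nsum alpha (L-1) (1/k) =
     sum_{k_2,...,k_L >= 1} (1/k /\ 1/k_2 /\ ... /\ 1/k_L) prod_{i=2}^L k_i alpha_{k_i}
   (as an iterated sum of nonnegative terms). *)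
Fixpoint nsum (alpha : nat -> R) (j : nat) (m : R) : R :=
  match j with
  | O => m
  | S j' => series (fun n => INR (S n) * alpha (S n) * nsum alpha j' (Rmin m (/ INR (S n))))
  end.

Definition u (alpha : nat -> R) (L k : nat) : R :=
  INR k * nsum alpha (L - 1) (/ INR k).

(* Main.v *)
Require Import Defs.
From Stdlib Require Import Reals.
From Stdlib Require Import Lra Lia Arith Classical ClassicalEpsilon.
Open Scope R_scope.

Lemma growing_sum f : (forall n, 0 <= f n) -> Un_growing (sum_f_R0 f).
Proof. intros H n. simpl. specialize (H (S n)). lra. Qed.

Lemma cst_cv B : Un_cv (fun _ => B) B.
Proof. intros e He. exists 0%nat. intros n _. unfold Rdist. rewrite Rminus_diag, Rabs_R0. lra. Qed.

Lemma lim_le f l B : Un_cv (sum_f_R0 f) l -> (forall n, sum_f_R0 f n <= B) -> l <= B.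
Proof. intros H1 H2. exact (Rle_cv_lim H2 H1 (cst_cv B)). Qed.

Lemma series_eq f l : infinite_sum f l -> series f = l.
Proof.
  intros H. unfold series. destruct excluded_middle_informative as [e|n].
  - destruct constructive_indefinite_description as [l' H']. simpl.
    exact (uniqueness_sum _ _ _ H' H).
  - exfalso. apply n. exists l. exact H.
Qed.

Lemma series_spec f B : (forall n, 0 <= f n) -> (forall n, sum_f_R0 f n <= B) ->
  infinite_sum f (series f) /\ (forall n, sum_f_R0 f n <= series f) /\ series f <= B.
Proof.
  intros Hf HB.
  assert (Hub : has_ub (sum_f_R0 f)).
  { exists B. intros x [i ->]. apply HB. }
  destruct (growing_cv _ (growing_sum f Hf) Hub) as [l Hl].
  assert (infinite_sum f l) by exact Hl.
  rewrite (series_eq f l H). split; [exact H|split].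
  - apply growing_ineq; [apply growing_sum; exact Hf| exact Hl].
  - apply (lim_le f l B Hl HB).
Qed.

Lemma term_le_sum f n : (forall n, 0 <= f n) -> f n <= sum_f_R0 f n.
Proof. intros H. destruct n; simpl. lra. assert (0 <= sum_f_R0 f n).
  { clear - H. induction n; simpl. apply H. specialize (H (S n)); lra. }
  lra. Qed.

Lemma sum_shift g n : sum_f_R0 g (S n) = g 0%nat + sum_f_R0 (fun i => g (S i)) n.
Proof. induction n. simpl. ring. simpl in *. rewrite IHn. ring. Qed.

Section S.
Variables (alpha : nat -> R) (abar : R).
Hypothesis Hnn : forall k, 0 <= alpha k.
Hypothesis Habar : infinite_sum (fun k => INR k * alpha k) abar.
Hypothesis Habar_pos : 0 < abar.

Let a n := INR (S n) * alpha (S n).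

Lemma a_nn n : 0 <= a n.
Proof. unfold a. apply Rmult_le_pos. apply pos_INR. apply Hnn. Qed.

Lemma g_nn n : 0 <= INR n * alpha n.
Proof. apply Rmult_le_pos. apply pos_INR. apply Hnn. Qed.

Lemma a_sum n : sum_f_R0 a n <= abar.
Proof.
  assert (H := sum_shift (fun k => INR k * alpha k) n). cbv beta in H.
  replace (INR 0 * alpha 0%nat) with 0 in H by (simpl; ring).
  assert (sum_f_R0 (fun k => INR k * alpha k) (S n) <= abar).
  { apply growing_ineq. apply growing_sum. apply g_nn. exact Habar. }
  unfold a. lra.
Qed.

Lemma a_pos : exists n0, 0 < a n0.
Proof.
  apply NNPP. intro Hc.
  assert (Ha0 : forall n, a n = 0).
  { intro n. assert (~ 0 < a n) by (intro; apply Hc; exists n; auto).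
    pose proof (a_nn n). lra. }
  assert (Hs : forall n, sum_f_R0 (fun k => INR k * alpha k) n = 0).
  { intro n. apply sum_eq_R0. intros i _. destruct i. simpl; ring. apply (Ha0 i). }
  assert (infinite_sum (fun k => INR k * alpha k) 0).
  { intros e He. exists 0%nat. intros n _. rewrite Hs. unfold Rdist.
    rewrite Rminus_diag, Rabs_R0. lra. }
  pose proof (uniqueness_sum _ _ _ Habar H). lra.
Qed.

Lemma nsum_bound j : forall m, 0 < m -> 0 < nsum alpha j m <= m * abar ^ j.
Proof.
  induction j; intros m Hm.
  - simpl. lra.
  - cbn [nsum].
    set (F := fun n => INR (S n) * alpha (S n) * nsum alpha j (Rmin m (/ INR (S n)))).
    assert (Ht : forall n, 0 < Rmin m (/ INR (S n)) <= m).
    { intro n. split. apply Rmin_pos. exact Hm. apply Rinv_0_lt_compat, lt_0_INR; lia.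
      apply Rmin_l. }
    assert (HF : forall n, 0 <= F n <= a n * (m * abar ^ j)).
    { intro n. unfold F. fold (a n). destruct (Ht n) as [T1 T2].
      destruct (IHj _ T1) as [I1 I2]. pose proof (a_nn n).
      assert (0 < abar ^ j) by (apply pow_lt; lra).
      split. apply Rmult_le_pos; lra.
      apply Rmult_le_compat_l. lra. nra. }
    assert (HB : forall n, sum_f_R0 F n <= m * abar ^ S j).
    { intro n. apply Rle_trans with (sum_f_R0 (fun i => a i * (m * abar ^ j)) n).
      apply sum_Rle. intros; apply HF.
      rewrite <- scal_sum. pose proof (a_sum n). change (abar ^ S j) with (abar * abar ^ j).
      assert (0 < abar ^ j) by (apply pow_lt; lra).
      replace (m * (abar * abar ^ j)) with ((m * abar ^ j) * abar) by ring.
      apply Rmult_le_compat_l. nra. exact H. }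
    destruct (series_spec F _ (fun n => proj1 (HF n)) HB) as [_ [H1 H2]].
    split; [|exact H2].
    destruct a_pos as [n0 Hn0].
    apply Rlt_le_trans with (F n0).
    + unfold F. fold (a n0). destruct (Ht n0) as [T1 _].
      destruct (IHj _ T1). apply Rmult_lt_0_compat; lra.
    + apply Rle_trans with (sum_f_R0 F n0). apply term_le_sum. intro; apply HF. apply H1.
Qed.

Lemma nsum_mono j : forall m1 m2, 0 < m1 <= m2 -> m1 * nsum alpha j m2 <= m2 * nsum alpha j m1.
Proof.
  induction j; intros m1 m2 Hm.
  - simpl. lra.
  - cbn [nsum].
    set (F1 := fun n => INR (S n) * alpha (S n) * nsum alpha j (Rmin m1 (/ INR (S n)))).
    set (F2 := fun n => INR (S n) * alpha (S n) * nsum alpha j (Rmin m2 (/ INR (S n)))).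
    assert (Hnn2 : forall m n, 0 < m -> 0 <= INR (S n) * alpha (S n) * nsum alpha j (Rmin m (/ INR (S n)))).
    { intros m n Hm0. fold (a n). apply Rmult_le_pos. apply a_nn.
      left. apply nsum_bound. apply Rmin_pos. exact Hm0. apply Rinv_0_lt_compat, lt_0_INR; lia. }
    assert (Hbd : forall m, 0 < m -> forall n, sum_f_R0 (fun n => INR (S n) * alpha (S n) * nsum alpha j (Rmin m (/ INR (S n)))) n <= m * abar ^ S j).
    { intros m Hm0 n. apply Rle_trans with (sum_f_R0 (fun i => a i * (m * abar ^ j)) n).
      apply sum_Rle. intros i _. fold (a i). apply Rmult_le_compat_l. apply a_nn.
      apply Rle_trans with (Rmin m (/ INR (S i)) * abar ^ j).
      apply nsum_bound. apply Rmin_pos. exact Hm0. apply Rinv_0_lt_compat, lt_0_INR; lia.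
      apply Rmult_le_compat_r. left; apply pow_lt; lra. apply Rmin_l.
      rewrite <- scal_sum. pose proof (a_sum n). change (abar ^ S j) with (abar * abar ^ j).
      assert (0 < abar ^ j) by (apply pow_lt; lra).
      replace (m * (abar * abar ^ j)) with ((m * abar ^ j) * abar) by ring.
      apply Rmult_le_compat_l. nra. exact H. }
    assert (Hm1 : 0 < m1) by lra. assert (Hm2 : 0 < m2) by lra.
    destruct (series_spec F1 _ (fun n => Hnn2 m1 n Hm1) (Hbd m1 Hm1)) as [_ [S1 _]].
    destruct (series_spec F2 _ (fun n => Hnn2 m2 n Hm2) (Hbd m2 Hm2)) as [I2 _].
    assert (Hterm : forall n, m1 * F2 n <= m2 * F1 n).
    { intro n. unfold F1, F2. fold (a n). pose proof (a_nn n).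
      set (t := / INR (S n)). assert (Tp : 0 < t) by (apply Rinv_0_lt_compat, lt_0_INR; lia).
      assert (K : m1 * nsum alpha j (Rmin m2 t) <= m2 * nsum alpha j (Rmin m1 t)).
      { destruct (Rle_dec m2 t).
        - rewrite !Rmin_left by lra. apply IHj. lra.
        - destruct (Rle_dec m1 t).
          + rewrite (Rmin_right m2 t) by lra. rewrite Rmin_left by lra.
            assert (m1 * nsum alpha j t <= t * nsum alpha j m1) by (apply IHj; lra).
            assert (0 < nsum alpha j m1) by (apply nsum_bound; lra). nra.
          + rewrite !Rmin_right by lra.
            assert (0 < nsum alpha j t) by (apply nsum_bound; lra). nra. }
      nra. }
    assert (HB2 : forall n, sum_f_R0 F2 n <= m2 * series F1 / m1).
    { intro n. apply (Rmult_le_reg_l m1). lra.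
      replace (m1 * (m2 * series F1 / m1)) with (m2 * series F1) by (field; lra).
      apply Rle_trans with (m2 * sum_f_R0 F1 n); [|apply Rmult_le_compat_l; [lra|apply S1]].
      rewrite !scal_sum. apply sum_Rle. intros i _. rewrite (Rmult_comm (F2 i)), (Rmult_comm (F1 i)). apply Hterm. }
    pose proof (lim_le F2 _ _ I2 HB2).
    apply (Rmult_le_reg_r (/ m1)). apply Rinv_0_lt_compat; lra.
    replace (m1 * series F2 * / m1) with (series F2) by (field; lra).
    unfold Rdiv in H. lra.
Qed.

End S.

Lemma find_k0 (P : nat -> Prop) N : (forall k, P (S k) -> P k) -> ~ P N ->
  exists k0, forall k, P k <-> (k < k0)%nat.
Proof.
  intros Hd. assert (Dn : forall j, P j -> forall k, (k <= j)%nat -> P k).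
  { induction j; intros Hj k Hk. replace k with 0%nat by lia. exact Hj.
    destruct (Nat.eq_dec k (S j)) as [->|]. exact Hj. apply IHj. apply Hd, Hj. lia. }
  induction N; intros HN.
  - exists 0%nat. intro k. split; intro H. exfalso. apply HN. apply (Dn k H). lia. lia.
  - destruct (classic (P N)) as [HP|HP].
    + exists (S N). intro k. split; intro H.
      * destruct (le_lt_dec k N). lia. exfalso. apply HN. apply (Dn k H). lia.
      * apply (Dn N HP). lia.
    + apply IHN; exact HP.
Qed.

Theorem mainTheorem5 (L : nat) (rho : R) (alpha : nat -> R) (abar : R)
  (HL : (2 <= L)%nat) (Hrho : 0 < rho)
  (Hnn : forall k, 0 <= alpha k)
  (Hnz : exists k, alpha k <> 0)
  (Habar : infinite_sum (fun k => INR k * alpha k) abar)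
  (Habar_pos : 0 < abar)
  (Hfix : forall k : nat, alpha (S k) * u alpha L (S k) = rho * abar ^ (L - 1) * alpha k) :
  (forall k, 0 < alpha k) /\
  (forall k : nat, alpha (S k) / alpha k = rho * abar ^ (L - 1) / u alpha L (S k)) /\
  (forall k : nat, u alpha L (S k) < rho * abar ^ (L - 1) -> alpha k < alpha (S k)) /\
  (forall k : nat, rho * abar ^ (L - 1) <= u alpha L (S k) -> alpha (S k) <= alpha k) /\
  (exists k0 : nat,
      (forall k : nat, (0 < k)%nat -> (u alpha L k < rho * abar ^ (L - 1) <-> (k <= k0)%nat)) /\
      (forall k : nat, (k < k0)%nat -> alpha k < alpha (S k)) /\
      (forall k : nat, (k0 <= k)%nat -> alpha (S k) <= alpha k) /\
      (forall k : nat, alpha k <= alpha k0)).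
Proof.
  set (c := rho * abar ^ (L - 1)) in *.
  assert (Hc : 0 < c) by (unfold c; apply Rmult_lt_0_compat; [lra|apply pow_lt; lra]).
  assert (Hu : forall k, 0 < u alpha L (S k)).
  { intro k. unfold u. apply Rmult_lt_0_compat. apply lt_0_INR; lia.
    apply (nsum_bound alpha abar Hnn Habar Habar_pos). apply Rinv_0_lt_compat, lt_0_INR; lia. }
  assert (Hmono : forall k, u alpha L (S k) <= u alpha L (S (S k))).
  { intro k. unfold u.
    assert (Hp : 0 < INR (S k)) by (apply lt_0_INR; lia).
    assert (Hq : 0 < INR (S (S k))) by (apply lt_0_INR; lia).
    assert (Hpq : INR (S k) <= INR (S (S k))) by (apply le_INR; lia).
    pose proof (nsum_mono alpha abar Hnn Habar Habar_pos (L - 1) (/ INR (S (S k))) (/ INR (S k))) as H.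
    assert (H' : / INR (S (S k)) * nsum alpha (L - 1) (/ INR (S k)) <=
                 / INR (S k) * nsum alpha (L - 1) (/ INR (S (S k)))).
    { apply H. split. apply Rinv_0_lt_compat; lra. apply Rinv_le_contravar; lra. }
    apply Rmult_le_compat_l with (r := INR (S k) * INR (S (S k))) in H'; [|nra].
    replace (INR (S k) * INR (S (S k)) * (/ INR (S (S k)) * nsum alpha (L - 1) (/ INR (S k))))
      with (INR (S k) * nsum alpha (L - 1) (/ INR (S k))) in H' by (field; lra).
    replace (INR (S k) * INR (S (S k)) * (/ INR (S k) * nsum alpha (L - 1) (/ INR (S (S k)))))
      with (INR (S (S k)) * nsum alpha (L - 1) (/ INR (S (S k)))) in H' by (field; lra).
    exact H'. }
  assert (Up : forall k, 0 < alpha k -> 0 < alpha (S k)).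
  { intros k Hk. pose proof (Hfix k). pose proof (Hu k).
    destruct (Hnn (S k)) as [|E]; auto. rewrite <- E in H. nra. }
  assert (Dn : forall k, 0 < alpha (S k) -> 0 < alpha k).
  { intros k Hk. pose proof (Hfix k). pose proof (Hu k).
    destruct (Hnn k) as [|E]; auto. rewrite <- E in H. nra. }
  assert (Hpos : forall k, 0 < alpha k).
  { destruct Hnz as [k0 Hk0].
    assert (P0 : 0 < alpha k0) by (destruct (Hnn k0); auto; congruence).
    assert (D : forall n, 0 < alpha n -> forall i, (i <= n)%nat -> 0 < alpha i).
    { induction n; intros Hn i Hi. replace i with 0%nat by lia. exact Hn.
      destruct (Nat.eq_dec i (S n)) as [->|]. exact Hn. apply IHn. apply Dn, Hn. lia. }
    assert (U : forall d, 0 < alpha (k0 + d)%nat).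
    { induction d. rewrite Nat.add_0_r. exact P0. rewrite Nat.add_succ_r. apply Up, IHd. }
    intro k. destruct (le_lt_dec k k0). apply (D k0 P0). lia.
    replace k with (k0 + (k - k0))%nat by lia. apply U. }
  assert (Inc : forall k, u alpha L (S k) < c -> alpha k < alpha (S k)).
  { intros k H. pose proof (Hfix k). pose proof (Hu k). pose proof (Hpos k).
    apply (Rmult_lt_reg_r (u alpha L (S k))). lra. rewrite H0. nra. }
  assert (Dec : forall k, c <= u alpha L (S k) -> alpha (S k) <= alpha k).
  { intros k H. pose proof (Hfix k). pose proof (Hu k). pose proof (Hpos k).
    apply (Rmult_le_reg_r (u alpha L (S k))). lra. rewrite H0. nra. }
  split; [exact Hpos|]. split.
  { intro k. pose proof (Hfix k). pose proof (Hu k). pose proof (Hpos k).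
    assert (E : alpha (S k) = c * alpha k / u alpha L (S k)) by (rewrite <- H; field; lra).
    rewrite E. field. lra. }
  split; [exact Inc|]. split; [exact Dec|].
  assert (HN : exists N, ~ (u alpha L (S N) < c)).
  { apply NNPP. intro Hn.
    assert (All : forall k, u alpha L (S k) < c).
    { intro k. apply NNPP. intro. apply Hn. exists k. auto. }
    assert (G : forall k, alpha 0%nat <= alpha k).
    { induction k. lra. pose proof (Inc k (All k)). lra. }
    assert (T : forall k, INR k * alpha k <= abar).
    { intro k. apply Rle_trans with (sum_f_R0 (fun k => INR k * alpha k) k).
      apply (term_le_sum (fun k => INR k * alpha k)). intro; apply Rmult_le_pos; [apply pos_INR|apply Hnn].
      apply growing_ineq. apply growing_sum. intro; apply Rmult_le_pos; [apply pos_INR|apply Hnn]. exact Habar. }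
    pose proof (Hpos 0%nat) as H0.
    destruct (INR_unbounded (abar / alpha 0%nat)) as [n Hn'].
    pose proof (T n). pose proof (G n). pose proof (pos_INR n).
    assert (INR n * alpha 0%nat > abar).
    { apply Rmult_gt_compat_r with (r := alpha 0%nat) in Hn'; [|lra].
      unfold Rdiv in Hn'. rewrite Rmult_assoc, Rinv_l in Hn' by lra. lra. }
    nra. }
  destruct HN as [N HN].
  destruct (find_k0 (fun k => u alpha L (S k) < c) N) as [k0 Hk0].
  { intros k H. pose proof (Hmono k). lra. }
  exact HN.
  exists k0. split; [|split; [|split]].
  - intros k Hk. destruct k. lia. rewrite (Hk0 k). lia.
  - intros k Hk. apply Inc. apply Hk0. exact Hk.
  - intros k Hk. apply Dec. destruct (Rlt_le_dec (u alpha L (S k)) c) as [H|H]; auto.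
    apply Hk0 in H. lia.
  - intro k. destruct (le_lt_dec k k0).
    + assert (A : forall d k, (k + d)%nat = k0 -> alpha k <= alpha k0).
      { induction d; intros j Hj. replace j with k0 by lia. lra.
        apply Rle_trans with (alpha (S j)). left. apply Inc, Hk0. lia. apply IHd. lia. }
      apply (A (k0 - k)%nat). lia.
    + assert (A : forall d, alpha (k0 + d)%nat <= alpha k0).
      { induction d. rewrite Nat.add_0_r. lra. rewrite Nat.add_succ_r.
        apply Rle_trans with (alpha (k0 + d)%nat); auto. apply Dec.
        destruct (Rlt_le_dec (u alpha L (S (k0 + d))) c) as [H|H]; auto.
        apply Hk0 in H. lia. }
      replace k with (k0 + (k - k0))%nat by lia. apply A.
Qed.
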